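(* Let $S = Z(w^2 - F_{10}(x,y,z)) \subset \mathbb{P}(1,1,2,5)$ (weights $1,1,2,5$ for $x,y,z,w$, $F_{10}$ weighted homogeneous of degree $10$) be a surface with at worst canonical singularities. Let $G \leq \mathrm{Aut}(S)$ be the subgroup generated by those automorphisms whose associated matrix in $GL(2,\mathbb{C})$ is a scalar matrix. Then $|G| \leq 10$.
   Context: Every automorphism of $S$ extends to $\mathbb{P}(1,1,2,5)$ and has a unique lift to a graded automorphism of $\mathbb{C}[x,y,z,w]$ of the form $w\mapsto w$, $z\mapsto z$, $x\mapsto ax+cy$, $y \mapsto bx+dy$; the associated matrix is $A=\begin{pmatrix} a&b\\ c&d\end{pmatrix}$. *)

(* Defs.v *)
From HB Require Import structures.
From mathcomp Require Import all_boot all_order all_algebra.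
From mathcomp Require Import mpoly.
From mathcomp Require Import complex.
Set Implicit Arguments. Unset Strict Implicit. Unset Printing Implicit Defensive.
Import Order.TTheory GRing.Theory Num.Theory.
Local Open Scope ring_scope.

(* Setting: S = Z(w^2 - F(x,y,z)) in P(1,1,2,5), F in C[x,y,z] with
   x = 'X_0, y = 'X_1, z = 'X_2, weights 1,1,2. *)

Definition ix : 'I_3 := inord 0.
Definition iy : 'I_3 := inord 1.
Definition iz : 'I_3 := inord 2.

Definition whomog10 (C : comNzRingType) (F : {mpoly C[3]}) : Prop :=
  forall m : 'X_{1..3}, m \in msupp F ->
    (m ix + m iy + 2 * m iz = 10)%N.

Definition mx_subst (C : comNzRingType) (A : 'M[C]_2) : 3.-tuple {mpoly C[3]} :=
  [tuple A 0 0 *: 'X_ix + A 1 0 *: 'X_iy; A 0 1 *: 'X_ix + A 1 1 *: 'X_iy; 'X_iz].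

(* Aut(S), identified (via the unique normalized lift w|->w, z|->z) with the
   group of invertible matrices A whose substitution preserves w^2 - F,
   i.e. preserves F. *)
Definition AutS (C : comUnitRingType) (F : {mpoly C[3]}) (A : 'M[C]_2) : Prop :=
  A \in unitmx /\ F \mPo (mx_subst A) = F.

Definition scalar_gen (C : comUnitRingType) (F : {mpoly C[3]}) (A : 'M[C]_2) : Prop :=
  AutS F A /\ is_scalar_mx A.

Inductive gen_group (C : comUnitRingType) (P : 'M[C]_2 -> Prop) : 'M[C]_2 -> Prop :=
  | gen_one : gen_group P 1%:M
  | gen_in A : P A -> gen_group P A
  | gen_mul A B : gen_group P A -> gen_group P B -> gen_group P (A *m B)
  | gen_inv A : gen_group P A -> gen_group P (invmx A).

Definition G_scalar (C : comUnitRingType) (F : {mpoly C[3]}) : 'M[C]_2 -> Prop :=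
  gen_group (scalar_gen F).

(* Singular points of the affine cone X = {w^2 = F(x,y,z)} in C^4
   (point p = (x,y,z,w) with v = (x,y,z)). *)
Definition cone_sing (C : comNzRingType) (F : {mpoly C[3]}) (v : 'I_3 -> C) (w : C) : Prop :=
  w ^+ 2 = F.@[v] /\ 2%:R * w = 0 /\ forall i : 'I_3, (mderiv i F).@[v] = 0.

Definition wact (C : comNzRingType) (l : C) (v : 'I_3 -> C) : 'I_3 -> C :=
  fun i => l ^+ (if i == iz then 2 else 1)%N * v i.

(* S has (at worst) isolated singularities: the non-zero singular points of the
   cone lie in finitely many C^*-orbits.  (Necessary consequence of canonical
   singularities.) *)
Definition isolated_sing (C : fieldType) (F : {mpoly C[3]}) : Prop :=
  exists (n : nat) (L : 'I_n -> (('I_3 -> C) * C)%type),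
    forall v w, cone_sing F v w -> (exists i, v i != 0) \/ w != 0 ->
      exists k : 'I_n, exists2 l : C, l != 0 &
        v = wact l (L k).1 /\ w = l ^+ 5 * (L k).2.

(* Main.v *)
Require Import Defs.
From HB Require Import structures.
From mathcomp Require Import all_boot all_order all_algebra.
From mathcomp Require Import mpoly.
From mathcomp Require Import complex.
From mathcomp Require Import zify.
From Stdlib Require Import ClassicalEpsilon.
Import Order.TTheory GRing.Theory Num.Theory.
Local Open Scope ring_scope.

Lemma ixE : ix = 0. Proof. by apply: val_inj; rewrite /= inordK. Qed.
Lemma iyE : iy = 1. Proof. by apply: val_inj; rewrite /= inordK. Qed.
Lemma izE : iz = 2%:R. Proof. by apply: val_inj; rewrite /= inordK. Qed.

Lemma comp_scalar (C: comUnitRingType) (F : {mpoly C[3]}) (l : C) :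
  F \mPo mx_subst (l%:M) = \sum_(m <- msupp F) (F@_m * l ^+ (m ix + m iy)) *: 'X_[m].
Proof.
rewrite comp_mpolyEX; apply: eq_bigr => m _.
rewrite -scalerA; congr (_ *: _).
rewrite comp_mpolyX mpolyXE_id !big_ord_recr !big_ord0 /= !mul1r.
rewrite /tnth /= !mxE /= !scale0r addr0 add0r.
rewrite (_ : widen_ord _ (widen_ord _ ord_max) = 0 :> 'I_3); last by apply: val_inj.
rewrite (_ : widen_ord _ ord_max = 1 :> 'I_3); last by apply: val_inj.
rewrite ixE iyE !mulr1n !exprZn (_ : iz = ord_max); last by apply: val_inj; rewrite /= inordK.
by rewrite -!scalerAl -scalerAr -scalerAl scalerA -exprD.
Qed.

Lemma coef_scalar (C: comUnitRingType) (F : {mpoly C[3]}) (l : C) m0 :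
  m0 \in msupp F -> (F \mPo mx_subst (l%:M))@_m0 = F@_m0 * l ^+ (m0 ix + m0 iy).
Proof.
move=> hm; rewrite comp_scalar raddf_sum /= (bigD1_seq m0) ?msupp_uniq //=.
rewrite mcoeffZ mcoeffX eqxx mulr1 big1 ?addr0 // => m hm'.
by rewrite mcoeffZ mcoeffX (negbTE hm') mulr0.
Qed.
Lemma eval_zero (C : comNzRingType) (p : {mpoly C[3]}) (v : 'I_3 -> C) :
  (forall m, m \in msupp p -> (0 < m iz)%N) -> v iz = 0 -> p.@[v] = 0.
Proof.
move=> hp hv; rewrite mevalE big1_seq // => m /andP [_ hm].
by rewrite (bigD1 iz) //= hv expr0n gtn_eqF ?hp // mul0r mulr0.
Qed.

Lemma deriv_supp (C : comNzRingType) (F : {mpoly C[3]}) i m :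
  whomog10 F -> (forall m, m \in msupp F -> (m ix + m iy = 0)%N) ->
  m \in msupp (mderiv i F) -> (0 < m iz)%N.
Proof.
move=> hw h0; rewrite mcoeff_msupp mcoeff_deriv => hm.
have hm' : (m + U_(i))%MM \in msupp F.
  rewrite mcoeff_msupp; apply: contraNneq hm => ->; by rewrite mul0rn.
have := hw _ hm'; rewrite h0 // add0n !mnmDE !mnm1E.
by case: (i == iz) => /=; lia.
Qed.

Lemma degenerate (R : rcfType) (F : {mpoly R[i][3]}) :
  whomog10 F -> (forall m, m \in msupp F -> (m ix + m iy = 0)%N) -> ~ isolated_sing F.
Proof.
move=> hw h0 [n [L HL]].
have izx : (iz == ix) = false by rewrite ixE izE.
have izy : (iz == iy) = false by rewrite iyE izE.
have ixz : (ix == iz) = false by rewrite ixE izE.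
have iyz : (iy == iz) = false by rewrite iyE izE.
have ixy : (iy == ix) = false by rewrite ixE iyE.
pose v (j : 'I_n.+1) := fun i : 'I_3 => if i == ix then 1 else if i == iy then (j : nat)%:R else 0 : R[i].
have vz j : v j iz = 0 by rewrite /v izx izy.
have sing j : cone_sing F (v j) 0.
  split; first by rewrite expr0n /= eval_zero // => m hm; have := hw _ hm; rewrite h0 //; lia.
  split; first by rewrite mulr0.
  by move=> i; rewrite eval_zero // => m; apply: deriv_supp.
have ex j : exists k : 'I_n, exists2 l : R[i], l != 0 & v j = wact l (L k).1 /\ 0 = l ^+ 5 * (L k).2.
  apply: (HL _ _ (sing j)); by left; exists ix; rewrite /v eqxx oner_eq0.
have [f Hf] := fin_all_exists ex.
have finj : injective f.
  move=> j1 j2 e12.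
  have [l1 _ [h1 _]] := Hf j1; have [l2 _ [h2 _]] := Hf j2.
  rewrite e12 in h1.
  have x1 := congr1 (fun g => g ix) h1; have x2 := congr1 (fun g => g ix) h2.
  have y1 := congr1 (fun g => g iy) h1; have y2 := congr1 (fun g => g iy) h2.
  move: x1 x2 y1 y2; rewrite /wact /v /= ixz iyz ixy !eqxx !expr1 => x1 x2 y1 y2.
  have a0 : (L (f j2)).1 ix != 0.
    by apply/eqP => h; move: x2; rewrite h mulr0 => /eqP; rewrite oner_eq0.
  have el : l1 = l2 by apply: (mulIf a0); rewrite -x1 -x2.
  apply: val_inj; apply/eqP; rewrite -(eqr_nat R[i]) y1 y2 el //.
have := leq_card f finj; rewrite !card_ord; lia.
Qed.

Definition pb (P : Prop) : bool := if excluded_middle_informative P then true else false.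
Lemma pbP (P : Prop) : pb P <-> P.
Proof. by rewrite /pb; case: excluded_middle_informative. Qed.

Theorem corollary2p9 (R : rcfType) (F : {mpoly R[i][3]}) :
  whomog10 F -> isolated_sing F ->
  exists s : seq 'M[R[i]]_2,
    [/\ uniq s, (size s <= 10)%N & forall A, G_scalar F A <-> A \in s].
Proof.
move=> hw hiso.
case: (boolP (has (fun m : 'X_{1..3} => (0 < m ix + m iy)%N) (msupp F))); last first.
  move/hasPn => h0.
  have h0' : forall m, m \in msupp F -> (m ix + m iy = 0)%N by move=> m /h0; lia.
  by case: (@degenerate _ _ hw h0' hiso).
case/hasP => m0 hm0 he.
set e := (m0 ix + m0 iy)%N in he.
have e10 : (e <= 10)%N by have := hw _ hm0; rewrite /e; lia.
have root_gen A : scalar_gen F A -> exists l, A = l%:M /\ l ^+ e = 1.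
  case=> [[hu hc] /is_scalar_mxP [a eA]]; subst A; exists a; split => //.
  have := @coef_scalar _ F a _ hm0; rewrite hc => h.
  have hF0 : F@_m0 != 0 by rewrite -mcoeff_msupp.
  by apply: (mulfI hF0); rewrite mulr1 -h.
have gen A : G_scalar F A -> exists l, A = l%:M /\ l ^+ e = 1.
  rewrite /G_scalar; elim=> [|B hB|B C _ [b [-> hb]] _ [c [-> hc]]| B _ [b [-> hb]]].
  - by exists 1; rewrite expr1n.
  - exact: root_gen.
  - by exists (b * c); rewrite scalar_mxM exprMn hb hc mulr1.
  - by exists b^-1; rewrite invmx_scalar exprVn hb invr1.
pose p : {poly R[i]} := 'X^e - 1.
have [rs hrs] := closed_field_poly_normal p.
have szp : size p = e.+1 by rewrite /p -polyC1 size_XnsubC.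
have lc0 : lead_coef p != 0 by rewrite lead_coef_eq0 -size_poly_eq0 szp.
have hsz : size rs = e.
  by move: szp; rewrite {1}hrs size_scale // size_prod_XsubC => -[].
have inrs l : l ^+ e = 1 -> l \in rs.
  move=> hl; have : root p l by rewrite /root /p !hornerE hl subrr.
  by rewrite hrs rootZ // root_prod_XsubC.
exists (undup [seq A <- [seq r%:M | r <- rs] | pb (G_scalar F A)]); split.
- exact: undup_uniq.
- apply: (leq_trans (size_undup _)); rewrite size_filter; apply: (leq_trans (count_size _ _)).
  by rewrite size_map hsz.
- move=> A; rewrite mem_undup mem_filter; split.
  + move=> hA; apply/andP; split; first by apply/pbP.
    have [l [-> hl]] := gen _ hA; apply/mapP; exists l => //; exact: inrs.
  + by case/andP => /pbP.
Qed.
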